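(* In the multi-access coded caching scheme obtained from a cross resolvable design with a chosen $z\in\{2,\dots,r\}$ for which $\mu_z$ exists (described in the context), the number of users benefited in each transmission (the coding gain) is $g=2^z$.
   Context: A resolvable design $(X,\mathcal{A})$: $X$ a finite set of $v$ points, $\mathcal{A}$ a collection of $b$ blocks each of size $k$, partitioned into $r$ parallel classes, each being a set of $b_r=v/k$ pairwise disjoint blocks with union $X$. $\mu_z$ exists if $|B_1\cap\cdots\cap B_z|$ equals the same nonzero value $\mu_z$ for every choice of blocks from $z$ distinct parallel classes. Users: one user $U_H$ for each set $H$ of $z$ blocks from $z$ distinct parallel classes, connected to the caches of those blocks (one cache per block). Placement: each file $W_i$ is split into subfiles $W_{i,x}$, $x\in X$; the cache of block $A_j$ stores $W_{i,x}$ for $x\in A_j$ and all $i$. Delivery (distinct demands $d_m$): for each choice of $z$ parallel classes $\mathcal{P}_1,\dots,\mathcal{P}_z$ and each choice of a pair of distinct blocks $\{C_{s,i_s},C_{s,j_s}\}\subseteq\mathcal{P}_s$ for every $s\in[z]$, let $\mathcal{X}$ be the $2^z$ users whose caches consist of one block from each chosen pair; for $m\in\mathcal{X}$ connected to $C_{1,a_1},\dots,C_{z,a_z}$, with $e_s$ the other index of $\{i_s,j_s\}$, put $f_m=C_{1,e_1}\cap\cdots\cap C_{z,e_z}=\{y_{m,1},\dots,y_{m,\mu_z}\}$, and transmit $\bigoplus_{m\in\mathcal{X}}W_{d_m,y_{m,s}}$ for each $s\in[\mu_z]$. A user is benefited by a transmission if it obtains a subfile of its demanded file from it. *)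

(* Defs.v *)
From mathcomp Require Import all_boot.
Set Implicit Arguments. Unset Strict Implicit. Unset Printing Implicit Defensive.

(* A resolvable design on the finite point set X: r parallel classes, each
   consisting of br (= v/k) blocks indexed by 'I_br; block (i, j) is B i j. *)
Definition resolvable (X : finType) (r br k : nat) (B : 'I_r -> 'I_br -> {set X}) :=
  [/\ (forall i j, #|B i j| = k),
      (forall i j j', j != j' -> [disjoint B i j & B i j']) &
      (forall i, \bigcup_(j < br) B i j = [set: X])].

Definition mu_exists (X : finType) (r br : nat) (B : 'I_r -> 'I_br -> {set X})
    (z mu : nat) :=
  0 < mu /\
  forall (S : {set 'I_r}) (a : 'I_r -> 'I_br),
    #|S| = z -> #|\bigcap_(s in S) B s (a s)| = mu.

(* A user U_H is identified with H: a set of z blocks (given by their indices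
   (class, block)) from z distinct parallel classes. *)
Definition is_user (r br z : nat) (H : {set 'I_r * 'I_br}) : bool :=
  (#|H| == z) && [forall p in H, forall q in H, (p.1 == q.1) ==> (p == q)].

(* The points whose subfiles are available to user H (union of its caches). *)
Definition cache (X : finType) (r br : nat) (B : 'I_r -> 'I_br -> {set X})
    (H : {set 'I_r * 'I_br}) : {set X} :=
  \bigcup_(p in H) B p.1 p.2.

(* The 2^z users involved in the transmissions for classes S and pairs
   {pi s, pj s} of blocks of class s: one block from each chosen pair. *)
Definition tx_users (r br : nat) (S : {set 'I_r}) (pi pj : 'I_r -> 'I_br)
    : {set {set 'I_r * 'I_br}} :=
  [set [set (s, a s) | s in S] | a : {ffun 'I_r -> 'I_br} &
     [forall s in S, (a s == pi s) || (a s == pj s)]].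

(* e_s : the index of the pair {pi s, pj s} not used by user H in class s. *)
Definition other (r br : nat) (pi pj : 'I_r -> 'I_br) (H : {set 'I_r * 'I_br})
    (s : 'I_r) : 'I_br :=
  if (s, pi s) \in H then pj s else pi s.

Definition fset_m (X : finType) (r br : nat) (B : 'I_r -> 'I_br -> {set X})
    (S : {set 'I_r}) (pi pj : 'I_r -> 'I_br) (H : {set 'I_r * 'I_br}) : {set X} :=
  \bigcap_(s in S) B s (other pi pj H s).

(* A transmission is XOR_{m in Xu} W_{d m, pt m}.  User U is benefited if it
   obtains from it a subfile of its demanded file that it does not have:
   some summand is a subfile of its demanded file not in its cache, and all
   the other summands are subfiles it has cached. *)
Definition benefited (X : finType) (r br : nat) (B : 'I_r -> 'I_br -> {set X})
    (d : {set 'I_r * 'I_br} -> nat) (Xu : {set {set 'I_r * 'I_br}})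
    (pt : {set 'I_r * 'I_br} -> X) (U : {set 'I_r * 'I_br}) : bool :=
  [exists m in Xu,
     [&& d m == d U, pt m \notin cache B U &
         [forall m' in Xu, (m' != m) ==> (pt m' \in cache B U)]]].

(* Main.v *)
Require Import Defs.
From mathcomp Require Import all_boot.
Set Implicit Arguments. Unset Strict Implicit. Unset Printing Implicit Defensive.

Definition cc r br (pi pj : 'I_r -> 'I_br) (T : {set 'I_r}) (s : 'I_r) : 'I_br :=
  if s \in T then pi s else pj s.

Definition HT r br (S : {set 'I_r}) (pi pj : 'I_r -> 'I_br) (T : {set 'I_r})
  : {set 'I_r * 'I_br} := [set (s, cc pi pj T s) | s in S].

Lemma tx_usersE r br (S : {set 'I_r}) (pi pj : 'I_r -> 'I_br) :
  tx_users S pi pj = [set HT S pi pj T | T in powerset S].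
Proof.
apply/setP => H; apply/imsetP/imsetP.
- case=> a; rewrite inE => /forallP Pa ->.
  exists [set s in S | a s == pi s]; first by rewrite inE; apply/subsetP => s; rewrite inE => /andP [].

  apply: eq_in_imset => s sS; rewrite /cc inE sS /=.
  have := Pa s; rewrite sS /= => /orP [/eqP ->|/eqP ->]; first by rewrite eqxx.
  by case: eqP => [->|].
- case=> T _ ->.
  exists [ffun s => cc pi pj T s].
    rewrite inE; apply/forallP => s; apply/implyP => _; rewrite ffunE /cc.
    by case: (s \in T); rewrite eqxx ?orbT.
  by apply: eq_imset => s; rewrite ffunE.
Qed.

Lemma memHT r br (S : {set 'I_r}) (pi pj : 'I_r -> 'I_br) T s b :
  ((s, b) \in HT S pi pj T) = (s \in S) && (b == cc pi pj T s).
Proof.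
apply/imsetP/andP.
- by case=> s' s'S [-> ->].
- by case=> sS /eqP ->; exists s.
Qed.

Lemma otherHT r br (S : {set 'I_r}) (pi pj : 'I_r -> 'I_br) T s :
  s \in S -> pi s != pj s ->
  other pi pj (HT S pi pj T) s = if s \in T then pj s else pi s.
Proof.
move=> sS hp; rewrite /other memHT sS /= /cc.
by case: (s \in T); rewrite ?eqxx ?(negbTE hp).
Qed.

Lemma userHT r br z (S : {set 'I_r}) (pi pj : 'I_r -> 'I_br) T :
  #|S| = z -> is_user z (HT S pi pj T).
Proof.
move=> cS; rewrite /is_user /HT card_imset; last by move=> a b [].
rewrite cS eqxx /=; apply/forallP => p; apply/implyP => /imsetP [s _ ->].
apply/forallP => q; apply/implyP => /imsetP [s' _ ->] /=.
by apply/implyP => /eqP ->.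
Qed.

Theorem lemma4 (X : finType) (r br k z mu : nat) (B : 'I_r -> 'I_br -> {set X})
    (d : {set 'I_r * 'I_br} -> nat) :
  resolvable k B ->
  2 <= z <= r ->
  mu_exists B z mu ->
  (forall H H', is_user z H -> is_user z H' -> d H = d H' -> H = H') ->
  forall (S : {set 'I_r}) (pi pj : 'I_r -> 'I_br),
    #|S| = z ->
    (forall s, s \in S -> pi s != pj s) ->
  forall y : {set 'I_r * 'I_br} -> 'I_mu -> X,
    (forall m, m \in tx_users S pi pj ->
       injective (y m) /\ (forall t, y m t \in fset_m B S pi pj m)) ->
  forall t : 'I_mu,
    #|[set U | is_user z U &
         benefited B d (tx_users S pi pj) (fun m => y m t) U]| = 2 ^ z.
Proof.
move=> [_ Hdis _] _ _ dinj S pi pj cS hp y hy t.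
have Hd : forall s a b, a != b -> [disjoint B s a & B s b] by move=> s a b; apply: Hdis.
have cneq : forall T s, s \in S -> other pi pj (HT S pi pj T) s != cc pi pj T s.
  move=> T s sS; rewrite otherHT ?hp // /cc.
  by case: (s \in T); [rewrite eq_sym|]; apply: hp.
have inj : {in powerset S &, injective (HT S pi pj)}.
  move=> T T'; rewrite !inE => TS T'S E; apply/setP => s.
  case sS: (s \in S); last first.
    by rewrite (contraFF (fun h => subsetP TS s h) sS) (contraFF (fun h => subsetP T'S s h) sS).
  have : (s, cc pi pj T s) \in HT S pi pj T' by rewrite -E memHT sS eqxx.
  rewrite memHT sS /= /cc.
  by case: (s \in T); case: (s \in T') => //; rewrite ?(negbTE (hp s sS)) // eq_sym (negbTE (hp s sS)).
suff -> : [set U | is_user z U & benefited B d (tx_users S pi pj) (fun m => y m t) U]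
          = tx_users S pi pj.
  by rewrite tx_usersE card_in_imset // card_powerset cS.
have hy' := hy; rewrite tx_usersE in hy'.
apply/setP => U; rewrite inE; apply/andP/idP.
- case=> uU /existsP [m /andP [mX /and3P [/eqP dm _ _]]].
  have := mX; rewrite tx_usersE => /imsetP [T _ mE].
  have um : is_user z m by rewrite mE; apply: userHT.
  have e := dinj m U um uU dm. subst U. by rewrite -tx_usersE.
- rewrite tx_usersE => /imsetP [T TS ->]; split; first by apply: userHT.
  apply/existsP; exists (HT S pi pj T).
  have mX : HT S pi pj T \in [set HT S pi pj T | T in powerset S] by apply: imset_f.
  rewrite mX eqxx /=; apply/andP; split.
  + apply/bigcupP => -[p /imsetP [s sS ->] /=] hin.
    have := (hy' _ mX).2 t; rewrite /fset_m => /bigcapP /(_ s sS) hin2.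
    by rewrite (disjointFr (Hd s _ _ (cneq T s sS)) hin2) in hin.
  + apply/forallP => m'; apply/implyP => /imsetP [T' T'S ->]; apply/implyP => neq.
    have [s sS sT] : exists2 s, s \in S & (s \in T) != (s \in T').
      apply/exists_inP; apply: contraR neq => /exists_inPn H.
      apply/eqP; congr (HT S pi pj); apply/setP => s.
      case sS: (s \in S); first by have := H s sS; rewrite negbK => /eqP.
      move: TS T'S; rewrite !inE => TS T'S.
      by rewrite (contraFF (fun h => subsetP TS s h) sS) (contraFF (fun h => subsetP T'S s h) sS).
    have Hm' : HT S pi pj T' \in [set HT S pi pj T | T in powerset S] by apply: imset_f.
    have := (hy' _ Hm').2 t; rewrite /fset_m => /bigcapP /(_ s sS).
    rewrite otherHT ?hp // => hin.
    apply/bigcupP; exists (s, cc pi pj T s); first by rewrite memHT sS eqxx.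
    move: hin sT; rewrite /cc /=.
    by case: (s \in T); case: (s \in T').
Qed.
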